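(* Let $1\le m\le N$, $a\in V$ and $b\in\wedge^m(V)$. Then $\mathbf{x}\wedge b\in\mathcal{P}_1\otimes\wedge^{m+1}(V)$ and $$\sum_{i=1}^Na_i\mathcal{D}_i(\mathbf{x}\wedge b)=(1-\gamma\kappa)\,a\wedge b,$$ where the $\mathcal{D}_i$ are the Dunkl operators on $\mathcal{P}\otimes\wedge^{m+1}(V)$. In particular $\mathbf{x}\wedge b$ is singular for $\kappa=1/\gamma$, i.e. $\mathcal{D}_i(\mathbf{x}\wedge b)=0$ for all $1\le i\le N$ when $\kappa=1/\gamma$.
   Context: $R\subset\mathbb{R}^N$ is a reduced root system with $\operatorname{span}_{\mathbb{R}}R=\mathbb{R}^N$, $|v|^2=2$ for all $v\in R$, positive roots $R_+$; $W$ is the reflection group generated by $\sigma_v\colon x\mapsto x-\langle x,v\rangle v$, assumed to have one conjugacy class of reflections, so $W$ is indecomposable and its reflection representation $\tau$ on $V=\mathbb{R}^N$ is irreducible. $\gamma:=2\#R_+/N$ (the Coxeter number). $\{u_i\}$ is the standard orthonormal basis of $V$ and $\mathbf{x}:=\sum_{i=1}^Nx_i\otimes u_i\in\mathcal{P}_1\otimes V$, where $\mathcal{P}_1$ denotes linear polynomials in $x=(x_1,\dots,x_N)$; wedge products with $\mathbf{x}$ are taken in the $\wedge$-factor. $\tau_k$ is the representation of $W$ on $\wedge^k(V)$ induced by $\tau$. $W$ acts on $\mathcal{P}\otimes\wedge^k(V)$ by $w(p(x)\otimes b)=p(xw)\otimes\tau_k(w)b$, and the Dunkl operators (with constant parameter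 $\kappa$) are $\mathcal{D}_i(p\otimes b)=\frac{\partial p}{\partial x_i}\otimes b+\kappa\sum_{v\in R_+}\frac{p(x)-p(x\sigma_v)}{\langle x,v\rangle}v_i\otimes\tau_k(\sigma_v)b$, extended linearly. *)

(* Defs.v *)
From HB Require Import structures.
From mathcomp Require Import all_boot all_order all_algebra.
From mathcomp Require Import mpoly.
From Stdlib Require Import ClassicalEpsilon.

Set Implicit Arguments.
Unset Strict Implicit.
Unset Printing Implicit Defensive.

Import Order.TTheory GRing.Theory Num.Theory.
Local Open Scope ring_scope.

Section Dunkl.
Variables (R : realFieldType) (N : nat).

Definition dot (u v : 'rV[R]_N) : R := (u *m v^T) 0 0.

(* sigma_v as a matrix acting on row vectors: x sigma_v = x - <x,v> v *)
Definition refl_mx (v : 'rV[R]_N) : 'M[R]_N := 1%:M - v^T *m v.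

Definition root_system (Rt : seq 'rV[R]_N) : Prop :=
  [/\ uniq Rt,
      (<<Rt>>%VS = fullv),
      (forall v, v \in Rt -> dot v v = 2),
      (forall u v, u \in Rt -> v \in Rt -> u *m refl_mx v \in Rt)
    & (forall v (c : R), v \in Rt -> c *: v \in Rt -> c = 1 \/ c = -1)].

Definition generic (Rt : seq 'rV[R]_N) (u0 : 'rV[R]_N) : Prop :=
  forall v, v \in Rt -> dot u0 v != 0.
Definition pos_roots (Rt : seq 'rV[R]_N) (u0 : 'rV[R]_N) : seq 'rV[R]_N :=
  [seq v <- Rt | 0 < dot u0 v].

Inductive inW (Rt : seq 'rV[R]_N) : 'M[R]_N -> Prop :=
  | inW1 : inW Rt 1%:M
  | inWM v w : v \in Rt -> inW Rt w -> inW Rt (w *m refl_mx v).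

Definition one_refl_class (Rt : seq 'rV[R]_N) : Prop :=
  forall u v, u \in Rt -> v \in Rt ->
    exists w, inW Rt w /\ w \in unitmx /\ refl_mx u = invmx w *m refl_mx v *m w.

Definition coxeter (Rp : seq 'rV[R]_N) : R := 2 * (size Rp)%:R / N%:R.

(* ---------- exterior algebra /\(V) with coefficients in a comm. ring C,
   in the basis e_S = u_{s1} /\ ... /\ u_{sk} (s1 < ... < sk) ---------- *)
Local Notation ext C := {ffun {set 'I_N} -> C}.

Definition ebasis (C : comNzRingType) (S : {set 'I_N}) : ext C :=
  [ffun T => (T == S)%:R].

(* sign of e_S /\ e_T = sgn S T e_(S u T) for disjoint S, T *)
Definition wsign (C : comNzRingType) (S T : {set 'I_N}) : C :=
  (-1) ^+ #|[set p : 'I_N * 'I_N | [&& p.1 \in S, p.2 \in T & (p.2 < p.1)%N]]|.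

Definition wedge (C : comNzRingType) (a b : ext C) : ext C :=
  [ffun U => \sum_(S : {set 'I_N}) \sum_(T : {set 'I_N})
     if (S :&: T == set0) && (S :|: T == U) then wsign C S T * a S * b T else 0].

Definition escale (C : comNzRingType) (c : C) (b : ext C) : ext C :=
  [ffun S => c * b S].

Definition is_kvec (C : comNzRingType) (k : nat) (b : ext C) : Prop :=
  forall S : {set 'I_N}, #|S| != k -> b S = 0.

Definition vec1 (u : 'rV[R]_N) : ext R :=
  \sum_(i < N) escale (u 0 i) (ebasis R [set i]).

Definition tau (w : 'M[R]_N) (b : ext R) : ext R :=
  \sum_(S : {set 'I_N})
     escale (b S) (\big[@wedge R/ebasis R set0]_(i <- enum S) vec1 (delta_mx 0 i *m w)).

Local Notation poly := {mpoly R[N]}.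

Definition tens (p : poly) (c : ext R) : ext poly :=
  [ffun S => p * (c S)%:MP].

Definition linpoly (v : 'rV[R]_N) : poly := \sum_(j < N) v 0 j *: 'X_j.

Definition psub (w : 'M[R]_N) (p : poly) : poly :=
  p \mPo [tuple \sum_(i < N) w i j *: 'X_i | j < N].

(* the polynomial (p(x) - p(x sigma_v)) / <x,v> : the unique q with
   p(x) - p(x sigma_v) = q * <x,v> (exists for v != 0) *)
Definition ddiff (v : 'rV[R]_N) (p : poly) : poly :=
  epsilon (inhabits 0) (fun q => p - psub (refl_mx v) p = q * linpoly v).

Definition dunkl (Rp : seq 'rV[R]_N) (kappa : R) (i : 'I_N)
    (F : ext poly) : ext poly :=
  \sum_(S : {set 'I_N})
    (tens (mderiv i (F S)) (ebasis R S)
     + \sum_(v <- Rp)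
         tens ((kappa * v 0 i) *: ddiff v (F S)) (tau (refl_mx v) (ebasis R S))).

Definition xvec : ext poly :=
  \sum_(i < N) tens 'X_i (ebasis R [set i]).

Definition cst (b : ext R) : ext poly := tens 1 b.

End Dunkl.

(* Main.v *)
Require Import Defs.
From HB Require Import structures.
From mathcomp Require Import all_boot all_order all_algebra.
From mathcomp Require Import mpoly.
From mathcomp Require Import ring.
Set Implicit Arguments.
Unset Strict Implicit.
Unset Printing Implicit Defensive.
Import Order.TTheory GRing.Theory Num.Theory.
Local Open Scope ring_scope.

Section ExtGen.
Variables (N : nat) (C : comNzRingType).
Local Notation ext := {ffun {set 'I_N} -> C}.
Implicit Types (a b c : ext) (S T U : {set 'I_N}).

Lemma wedgeE a b U : wedge a b U = \sum_S \sum_T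
     if (S :&: T == set0) && (S :|: T == U) then wsign C S T * a S * b T else 0.
Proof. by rewrite ffunE. Qed.

Lemma wedgeDl a1 a2 b : wedge (a1 + a2) b = wedge a1 b + wedge a2 b.
Proof.
apply/ffunP => U; rewrite !ffunE -big_split; apply: eq_bigr => S _.
rewrite -big_split; apply: eq_bigr => T _; rewrite !ffunE.
by case: ifP => _ /=; rewrite ?addr0 // mulrDr mulrDl.
Qed.

Lemma wedgeDr a b1 b2 : wedge a (b1 + b2) = wedge a b1 + wedge a b2.
Proof.
apply/ffunP => U; rewrite !ffunE -big_split; apply: eq_bigr => S _.
rewrite -big_split; apply: eq_bigr => T _; rewrite !ffunE.
by case: ifP => _ /=; rewrite ?addr0 // mulrDr.
Qed.

Lemma wedge0l b : wedge 0 b = 0.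
Proof.
apply/ffunP => U; rewrite !ffunE big1 // => S _; rewrite big1 // => T _.
by rewrite ffunE; case: ifP; rewrite ?mulr0 ?mul0r.
Qed.

Lemma wedge0r a : wedge a 0 = 0.
Proof.
apply/ffunP => U; rewrite !ffunE big1 // => S _; rewrite big1 // => T _.
by rewrite ffunE; case: ifP; rewrite ?mulr0 ?mul0r.
Qed.

Lemma wedge_suml (I : Type) (r : seq I) (P : pred I) (F : I -> ext) b :
  wedge (\sum_(i <- r | P i) F i) b = \sum_(i <- r | P i) wedge (F i) b.
Proof.
by apply: (big_morph (fun a => wedge a b)); [move=> x y; apply: wedgeDl | apply: wedge0l].
Qed.

Lemma wedge_sumr (I : Type) (r : seq I) (P : pred I) (F : I -> ext) a :
  wedge a (\sum_(i <- r | P i) F i) = \sum_(i <- r | P i) wedge a (F i).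
Proof.
by apply: (big_morph (fun b => wedge a b)); [move=> x y; apply: wedgeDr | apply: wedge0r].
Qed.

Lemma wedgeZl k a b : wedge (escale k a) b = escale k (wedge a b).
Proof.
apply/ffunP => U; rewrite !ffunE mulr_sumr; apply: eq_bigr => S _.
rewrite mulr_sumr; apply: eq_bigr => T _; rewrite ffunE.
by case: ifP; rewrite ?mulr0 // !mulrA [_ * k]mulrC.
Qed.

Lemma wedgeZr k a b : wedge a (escale k b) = escale k (wedge a b).
Proof.
apply/ffunP => U; rewrite !ffunE mulr_sumr; apply: eq_bigr => S _.
rewrite mulr_sumr; apply: eq_bigr => T _; rewrite ffunE.
by case: ifP; rewrite ?mulr0 // mulrCA.
Qed.

Lemma escaleD k a b : escale k (a + b) = escale k a + escale k b.
Proof. by apply/ffunP => U; rewrite !ffunE mulrDr. Qed.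

Lemma escale0 k : escale k (0 : ext) = 0.
Proof. by apply/ffunP => U; rewrite !ffunE mulr0. Qed.

Lemma escale_sum (I : Type) (r : seq I) (P : pred I) (F : I -> ext) k :
  escale k (\sum_(i <- r | P i) F i) = \sum_(i <- r | P i) escale k (F i).
Proof.
by apply: (big_morph (escale k)); [move=> x y; apply: escaleD | apply: escale0].
Qed.

Lemma escaleA k l a : escale k (escale l a) = escale (k * l) a.
Proof. by apply/ffunP => U; rewrite !ffunE mulrA. Qed.

Lemma escale1 a : escale 1 a = a.
Proof. by apply/ffunP => U; rewrite !ffunE mul1r. Qed.

Lemma escaleDl k l a : escale (k + l) a = escale k a + escale l a.
Proof. by apply/ffunP => U; rewrite !ffunE mulrDl. Qed.

Lemma escaleN1 a : escale (-1) a = - a.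
Proof. by apply/ffunP => U; rewrite !ffunE mulN1r. Qed.

Lemma escale0l a : escale 0 a = 0.
Proof. by apply/ffunP => U; rewrite !ffunE mul0r. Qed.

Lemma escale_suml (I : Type) (r : seq I) (P : pred I) (F : I -> C) a :
  escale (\sum_(i <- r | P i) F i) a = \sum_(i <- r | P i) escale (F i) a.
Proof.
apply: (big_morph (fun k => escale k a)); [move=> x y; apply: escaleDl | apply: escale0l].
Qed.

Lemma ext_decomp a : a = \sum_S escale (a S) (ebasis C S).
Proof.
apply/ffunP => U; rewrite sum_ffunE (bigD1 U) //= !ffunE eqxx mulr1 big1 ?addr0 //.
by move=> S /negbTE nSU; rewrite !ffunE eq_sym nSU mulr0.
Qed.

Lemma wedge_basis S T : wedge (ebasis C S) (ebasis C T) =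
  if S :&: T == set0 then escale (wsign C S T) (ebasis C (S :|: T)) else 0.
Proof.
apply/ffunP => U; rewrite !ffunE (bigD1 S) //= (bigD1 T) //= !ffunE !eqxx.
rewrite big1; last first.
  by move=> T' /negbTE nT; rewrite !ffunE nT; case: ifP; rewrite ?mulr0.
rewrite big1; last first.
  move=> S' /negbTE nS; rewrite big1 // => T' _; rewrite !ffunE nS.
  by case: ifP; rewrite ?mulr0 ?mul0r.
rewrite !addr0; case: (S :&: T == set0) => /=; last by rewrite ffunE.
by rewrite !ffunE !mulr1 eq_sym; case: ifP => _ /=; rewrite ?mulr1 ?mulr0.
Qed.

End ExtGen.

Section ExtR.
Variables (R : realFieldType) (N : nat).
Local Notation ext := {ffun {set 'I_N} -> R}.
Implicit Types (a b c X : ext) (S T U : {set 'I_N}).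

Definition inv (S T : {set 'I_N}) : nat :=
  #|[set p : 'I_N * 'I_N | [&& p.1 \in S, p.2 \in T & (p.2 < p.1)%N]]|.

Lemma wsignE S T : wsign R S T = (-1) ^+ inv S T.
Proof. by []. Qed.

Lemma invUr S T1 T2 : T1 :&: T2 = set0 -> inv S (T1 :|: T2) = (inv S T1 + inv S T2)%N.
Proof.
move=> dT; rewrite /inv.
set A := [set p | _]; set A1 := [set p | _]; set A2 := [set p | _].
have -> : A = A1 :|: A2.
  by apply/setP => p; rewrite !inE; case: (p.1 \in S); case: (p.2 \in T1); case: (p.2 \in T2); case: (_ < _)%N.
rewrite cardsU; have -> : A1 :&: A2 = set0.
  apply/setP => p; rewrite !inE; apply/negP => /andP [/and3P [_ h1 _] /and3P [_ h2 _]].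
  by have := in_set0 p.2; rewrite -dT inE h1 h2.
by rewrite cards0 subn0.
Qed.

Lemma inv11 (i j : 'I_N) : inv [set i] [set j] = (j < i)%N.
Proof.
rewrite /inv; case: ltnP => h.
  have -> : [set p : 'I_N * 'I_N | [&& p.1 \in [set i], p.2 \in [set j] & (p.2 < p.1)%N]] = [set (i, j)].
    apply/setP => -[x y]; rewrite !inE /= xpair_eqE.
    by case: eqP => [->|]; case: eqP => [->|] //=; rewrite h.
  by rewrite cards1.
apply/eqP; rewrite cards_eq0; apply/eqP/setP => -[x y]; rewrite !inE /=.
by case: eqP => [->|]; case: eqP => [->|] //=; rewrite ltnNge h.
Qed.

Lemma inv1 (i : 'I_N) S : inv [set i] S = #|[set j in S | (j < i)%N]|.
Proof.
have inj : injective (pair i : 'I_N -> 'I_N * 'I_N) by move=> y1 y2 [].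
rewrite /inv -(card_imset _ inj).
apply: eq_card => -[x y]; rewrite !inE /=.
apply/idP/imsetP => [/and3P [/eqP -> yS lt]| [z]]; first by exists y; rewrite // inE yS lt.
by rewrite inE => /andP [zS lt] [-> ->]; rewrite eqxx zS lt.
Qed.

Definition e (i : 'I_N) : ext := ebasis R [set i].

Lemma vec1_delta i : vec1 (delta_mx 0 i) = e i.
Proof.
rewrite /vec1 (bigD1 i) //= big1 ?addr0.
  by rewrite mxE !eqxx escale1.
by move=> j nji; rewrite mxE (negbTE nji) andbF escale0l.
Qed.

Lemma vec1D (u v : 'rV[R]_N) : vec1 (u + v) = vec1 u + vec1 v.
Proof. by rewrite /vec1 -big_split; apply: eq_bigr => i _; rewrite mxE escaleDl. Qed.

Lemma vec1Z k (u : 'rV[R]_N) : vec1 (k *: u) = escale k (vec1 u).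
Proof. by rewrite /vec1 escale_sum; apply: eq_bigr => i _; rewrite mxE escaleA. Qed.

Lemma vec10 : vec1 (0 : 'rV[R]_N) = 0.
Proof. by rewrite /vec1 big1 // => i _; rewrite mxE escale0l. Qed.

Lemma vec1N (u : 'rV[R]_N) : vec1 (- u) = - vec1 u.
Proof. by rewrite -scaleN1r vec1Z escaleN1. Qed.

Lemma vec1_sum (I : Type) (r : seq I) (P : pred I) (F : I -> 'rV[R]_N) :
  vec1 (\sum_(i <- r | P i) F i) = \sum_(i <- r | P i) vec1 (F i).
Proof. exact: (big_morph _ vec1D vec10). Qed.

Lemma vec1E (u : 'rV[R]_N) : vec1 u = \sum_i escale (u 0 i) (e i).
Proof. by []. Qed.
Local Opaque vec1.

Lemma escaleN k a : escale k (- a) = - escale k a.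
Proof. by apply/ffunP => U; rewrite !ffunE mulrN. Qed.

Lemma escaleNl k a : escale (- k) a = - escale k a.
Proof. by apply/ffunP => U; rewrite !ffunE mulNr. Qed.

Lemma wedgeNr a b : wedge a (- b) = - wedge a b.
Proof. by rewrite -[- b]escaleN1 wedgeZr escaleN1. Qed.

Lemma wedgeNl a b : wedge (- a) b = - wedge a b.
Proof. by rewrite -[- a]escaleN1 wedgeZl escaleN1. Qed.

Lemma sign_inv_swap (i j : 'I_N) : i != j ->
  wsign R [set i] [set j] = - wsign R [set j] [set i].
Proof.
move=> nij; rewrite !wsignE !inv11; case: (ltngtP i j) => h //=.
all: try by rewrite !exprS !expr0 ?mulr1 ?opprK.
all: by move: nij; rewrite (val_inj h) eqxx.
Qed.

Lemma swap_basis (i j : 'I_N) S :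
  wedge (e i) (wedge (e j) (ebasis R S)) = - wedge (e j) (wedge (e i) (ebasis R S)).
Proof.
rewrite /e !wedge_basis.
have setI1 (k : 'I_N) A : ([set k] :&: A == set0) = (k \notin A).
  apply/eqP/idP => [h|h]; first by apply/negP => kA; have := in_set0 k; rewrite -h !inE eqxx kA.
  by apply/setP => x; rewrite !inE; case: eqP => // ->; rewrite (negbTE h).
rewrite !setI1.
case: (eqVneq i j) => [<-|nij].
  case: (boolP (i \in S)) => iS /=; rewrite ?wedge0r ?oppr0 //.
  by rewrite wedgeZr wedge_basis setI1 !inE eqxx /= escale0 oppr0.
have nji : (j == i) = false by rewrite eq_sym (negbTE nij).
case: (boolP (j \in S)) => jS; case: (boolP (i \in S)) => iS /=;
  rewrite ?wedge0r ?oppr0 ?wedgeZr ?wedge_basis ?setI1 ?inE ?nji ?(negbTE nij) ?(negbTE iS) ?(negbTE jS) ?iS ?jS /=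
  ?escale0 ?oppr0 //.
have d1 : [set j] :&: S = set0 by apply/eqP; rewrite setI1.
have d2 : [set i] :&: S = set0 by apply/eqP; rewrite setI1.
rewrite !escaleA -escaleNl [j |: (i |: S)]setUCA.
congr (escale _ _); rewrite !wsignE !(invUr _ d1) !(invUr _ d2) !exprD.
have := sign_inv_swap nij; rewrite !wsignE => ->. ring.
Qed.


Lemma swap_ee (i j : 'I_N) X :
  wedge (e i) (wedge (e j) X) = - wedge (e j) (wedge (e i) X).
Proof.
rewrite [X]ext_decomp !wedge_sumr -sumrN; apply: eq_bigr => S _.
by rewrite !wedgeZr swap_basis escaleN.
Qed.

Lemma swap_e1 (i : 'I_N) (q : 'rV[R]_N) X :
  wedge (e i) (wedge (vec1 q) X) = - wedge (vec1 q) (wedge (e i) X).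
Proof.
rewrite vec1E !wedge_suml !wedge_sumr -sumrN; apply: eq_bigr => j _.
by rewrite !wedgeZl !wedgeZr swap_ee escaleN.
Qed.

Lemma swap_gen (y : ext)
  (Hy : forall i X, wedge (e i) (wedge y X) = - wedge y (wedge (e i) X)) p X :
  wedge (vec1 p) (wedge y X) = - wedge y (wedge (vec1 p) X).
Proof.
rewrite vec1E !wedge_suml !wedge_sumr -sumrN; apply: eq_bigr => i _.
by rewrite !wedgeZl !wedgeZr Hy escaleN.
Qed.

Lemma swap1 (p q : 'rV[R]_N) X :
  wedge (vec1 p) (wedge (vec1 q) X) = - wedge (vec1 q) (wedge (vec1 p) X).
Proof. by apply: swap_gen => i Y; apply: swap_e1. Qed.

Lemma kill1 (p : 'rV[R]_N) X : wedge (vec1 p) (wedge (vec1 p) X) = 0.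
Proof.
have := swap1 p p X; move: (wedge (vec1 p) (wedge (vec1 p) X)) => Y h.
apply/ffunP => S; have := congr1 (fun f : ext => f S) h; rewrite /= !ffunE => hS.
have : (2 : R) * Y S = 0 by rewrite mulr2n mulrDl mul1r {1}hS addNr.
by move/eqP; rewrite mulf_eq0 pnatr_eq0 /= => /eqP.
Qed.


Definition Qw (g : 'I_N -> 'rV[R]_N) (l : seq 'I_N) : ext :=
  \big[@wedge N R/ebasis R set0]_(j <- l) vec1 (g j).

Lemma Qw_cons g j l : Qw g (j :: l) = wedge (vec1 (g j)) (Qw g l).
Proof. by rewrite /Qw big_cons. Qed.

Lemma Qw_nil g : Qw g [::] = ebasis R set0.
Proof. by rewrite /Qw big_nil. Qed.

Lemma moveIn g i l1 l2 :
  wedge (vec1 (g i)) (Qw g (l1 ++ l2)) = escale ((-1) ^+ size l1) (Qw g (l1 ++ i :: l2)).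
Proof.
elim: l1 => [|j l1 IH] /=; first by rewrite expr0 escale1 Qw_cons.
by rewrite !Qw_cons swap1 IH wedgeZr exprS mulN1r escaleNl.
Qed.

Lemma sq_sign k : ((-1) ^+ k) * ((-1) ^+ k) = 1 :> R.
Proof. by rewrite -exprMn mulrNN mulr1 expr1n. Qed.

Lemma escale_sign_cancel k a b : escale ((-1) ^+ k) a = b -> a = escale ((-1) ^+ k) b.
Proof. by move=> <-; rewrite escaleA sq_sign escale1. Qed.

Lemma killIn g i l : i \in l -> wedge (vec1 (g i)) (Qw g l) = 0.
Proof.
case/splitPr => l1 l2.
have h := moveIn g i l1 l2; move/escale_sign_cancel: (esym h) => ->.
by rewrite wedgeZr kill1 escale0.
Qed.

Definition ltI (x y : 'I_N) := (x < y)%N.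

Lemma ltI_trans : transitive ltI.
Proof. by move=> x y z; apply: ltn_trans. Qed.

Lemma ltI_irr : irreflexive ltI.
Proof. by move=> x; rewrite /ltI ltnn. Qed.

Lemma sorted_enumS (S : {set 'I_N}) : sorted ltI (enum S).
Proof.
rewrite -deprecated_filter_index_enum.
apply: sorted_filter; first exact: ltI_trans.
have : sorted ltn (map val (enum 'I_N)) by rewrite val_enum_ord iota_ltn_sorted.
rewrite sorted_map.
have -> : enum 'I_N = index_enum 'I_N by rewrite /index_enum /= enumT; unlock.
by [].
Qed.

Lemma lt_split (s : seq 'I_N) (i : 'I_N) : sorted ltI s ->
  s = [seq j : 'I_N <- s | (j < i)%N] ++ [seq j : 'I_N <- s | ~~ (j < i)%N].
Proof.
move=> ss; apply: (irr_sorted_eq ltI_trans ltI_irr) => //.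
  rewrite sorted_pairwise; last exact: ltI_trans.
  move: ss; rewrite sorted_pairwise; last exact: ltI_trans.
  move=> ps; rewrite pairwise_cat; apply/and3P; split.
  - apply/allrelP => x y; rewrite !mem_filter => /andP [xi _] /andP [yi _].
    by rewrite /ltI (leq_trans xi) // leqNgt.
  - exact: pairwise_filter.
  - exact: pairwise_filter.
by move=> x; rewrite mem_cat !mem_filter; case: (x < i)%N; rewrite /= ?orbF.
Qed.

Lemma mem_fenum (P : pred 'I_N) (S : {set 'I_N}) x :
  (x \in [seq j <- enum S | P j]) = P x && (x \in S).
Proof. by rewrite mem_filter mem_enum. Qed.

Lemma ins_enum (S : {set 'I_N}) (i : 'I_N) : i \notin S ->
  enum (i |: S) = [seq j : 'I_N <- enum S | (j < i)%N] ++ i :: [seq j : 'I_N <- enum S | ~~ (j < i)%N].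
Proof.
move=> iS; apply: (irr_sorted_eq ltI_trans ltI_irr); first exact: sorted_enumS.
  have ps := sorted_enumS S; rewrite sorted_pairwise in ps; last exact: ltI_trans.
  rewrite sorted_pairwise; last exact: ltI_trans.
  rewrite pairwise_cat pairwise_cons; apply/and3P; split.
  - apply/allrelP => x y; rewrite in_cons !mem_filter => /andP [xi _].
    case/orP => [/eqP -> //| /andP [yi _]].
    by rewrite /ltI (leq_trans xi) // leqNgt.
  - exact: pairwise_filter.
  apply/andP; split.
    apply/allP => y; rewrite mem_filter mem_enum => /andP [yi yS].
    rewrite /ltI ltn_neqAle leqNgt yi andbT; apply/negP => /eqP/val_inj ey.
    by move: iS; rewrite ey yS.
  exact: pairwise_filter.
move=> x; rewrite mem_enum mem_cat in_cons !mem_fenum !inE.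
by case: (x < i)%N; case: (x == i); case: (x \in S).
Qed.

Lemma size_lt (S : {set 'I_N}) (i : 'I_N) :
  size [seq j : 'I_N <- enum S | (j < i)%N] = inv [set i] S.
Proof.
rewrite inv1 cardE; apply/esym/perm_size.
apply: uniq_perm; [exact: enum_uniq | by rewrite filter_uniq // enum_uniq |].
by move=> x; rewrite mem_enum mem_filter mem_enum !inE andbC.
Qed.

Lemma Qw_ins g (S : {set 'I_N}) (i : 'I_N) : i \notin S ->
  wedge (vec1 (g i)) (Qw g (enum S)) = escale (wsign R [set i] S) (Qw g (enum (i |: S))).
Proof.
move=> iS; rewrite {1}(lt_split i (sorted_enumS S)) moveIn ins_enum //.
by rewrite size_lt wsignE.
Qed.

Lemma setI1_eq0 (k : 'I_N) (A : {set 'I_N}) : ([set k] :&: A == set0) = (k \notin A).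
Proof.
apply/eqP/idP => [h|h]; first by apply/negP => kA; have := in_set0 k; rewrite -h !inE eqxx kA.
by apply/setP => x; rewrite !inE; case: eqP => // ->; rewrite (negbTE h).
Qed.

Lemma Qw_enum (S : {set 'I_N}) : Qw (fun j => delta_mx 0 j) (enum S) = ebasis R S.
Proof.
move: {2}#|S| (erefl #|S|) => n; elim: n S => [|n IH] S cS.
  by move/eqP: cS; rewrite cards_eq0 => /eqP ->; rewrite enum_set0 Qw_nil.
have : (0 < #|S|)%N by rewrite cS.
rewrite card_gt0 => /set0Pn [i iS].
have iT : i \notin S :\ i by rewrite !inE eqxx.
have cT : #|S :\ i| = n by move: cS; rewrite (cardsD1 i S) iS add1n => -[].
have := Qw_ins (fun j => delta_mx 0 j) iT.
rewrite setD1K // IH // vec1_delta /e wedge_basis setI1_eq0 iT setD1K //.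
by move/esym/(congr1 (escale (wsign R [set i] (S :\ i)))); rewrite !escaleA wsignE sq_sign !escale1.
Qed.


Definition gw (w : 'M[R]_N) (j : 'I_N) : 'rV[R]_N := delta_mx 0 j *m w.

Lemma tauE (w : 'M[R]_N) b : tau w b = \sum_S escale (b S) (Qw (gw w) (enum S)).
Proof. by []. Qed.

Lemma tauD (w : 'M[R]_N) a b : tau w (a + b) = tau w a + tau w b.
Proof. by rewrite !tauE -big_split; apply: eq_bigr => S _; rewrite ffunE escaleDl. Qed.

Lemma tau0 (w : 'M[R]_N) : tau w 0 = 0.
Proof. by rewrite tauE big1 // => S _; rewrite ffunE escale0l. Qed.

Lemma tauZ (w : 'M[R]_N) k b : tau w (escale k b) = escale k (tau w b).
Proof. by rewrite !tauE escale_sum; apply: eq_bigr => S _; rewrite ffunE escaleA. Qed.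

Lemma tauN (w : 'M[R]_N) b : tau w (- b) = - tau w b.
Proof. by rewrite -[- b]escaleN1 tauZ escaleN1. Qed.

Lemma tau_sum (w : 'M[R]_N) (I : Type) (r : seq I) (P : pred I) (F : I -> ext) :
  tau w (\sum_(i <- r | P i) F i) = \sum_(i <- r | P i) tau w (F i).
Proof. exact: (big_morph _ (tauD w) (tau0 w)). Qed.

Lemma tau_basis (w : 'M[R]_N) S : tau w (ebasis R S) = Qw (gw w) (enum S).
Proof.
rewrite tauE (bigD1 S) //= big1 ?addr0; first by rewrite ffunE eqxx escale1.
by move=> T nTS; rewrite ffunE (negbTE nTS) escale0l.
Qed.

Lemma tau_mul_e (w : 'M[R]_N) i S :
  tau w (wedge (e i) (ebasis R S)) = wedge (vec1 (gw w i)) (tau w (ebasis R S)).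
Proof.
rewrite tau_basis /e wedge_basis setI1_eq0.
case: (boolP (i \in S)) => iS /=.
  by rewrite tau0 killIn // mem_enum.
by rewrite tauZ tau_basis Qw_ins.
Qed.

Lemma tau_mul_eX (w : 'M[R]_N) i X :
  tau w (wedge (e i) X) = wedge (vec1 (gw w i)) (tau w X).
Proof.
rewrite [X]ext_decomp wedge_sumr !tau_sum wedge_sumr; apply: eq_bigr => S _.
by rewrite wedgeZr !tauZ wedgeZr tau_mul_e.
Qed.

Lemma vec1_mul (p : 'rV[R]_N) (w : 'M[R]_N) :
  vec1 (p *m w) = \sum_i escale (p 0 i) (vec1 (gw w i)).
Proof.
rewrite {1}(row_sum_delta p) mulmx_suml vec1_sum; apply: eq_bigr => i _.
by rewrite -scalemxAl vec1Z.
Qed.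

Lemma tau_mul (w : 'M[R]_N) (p : 'rV[R]_N) X :
  tau w (wedge (vec1 p) X) = wedge (vec1 (p *m w)) (tau w X).
Proof.
rewrite vec1E wedge_suml tau_sum vec1_mul wedge_suml; apply: eq_bigr => i _.
by rewrite wedgeZl tauZ wedgeZl tau_mul_eX.
Qed.

Lemma mul_refl (u v : 'rV[R]_N) : u *m refl_mx v = u - dot u v *: v.
Proof.
rewrite /refl_mx mulmxBr mulmx1 mulmxA /dot.
by rewrite {1}[u *m v^T]mx11_scalar mul_scalar_mx.
Qed.

Lemma dot_delta (j : 'I_N) (v : 'rV[R]_N) : dot (delta_mx 0 j) v = v 0 j.
Proof. by rewrite /dot -rowE !mxE. Qed.

Lemma absorb (v : 'rV[R]_N) l :
  wedge (vec1 v) (Qw (gw (refl_mx v)) l) = wedge (vec1 v) (Qw (fun j => delta_mx 0 j) l).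
Proof.
elim: l => [|j l IH]; first by rewrite !Qw_nil.
rewrite !Qw_cons /gw mul_refl dot_delta vec1D vec1N vec1Z wedgeDl wedgeNl wedgeZl.
rewrite wedgeDr wedgeNr wedgeZr kill1 escale0 subr0.
by rewrite swap1 -/(gw (refl_mx v)) IH -swap1.
Qed.

Lemma refl_self (v : 'rV[R]_N) : dot v v = 2 -> v *m refl_mx v = - v.
Proof.
move=> h; rewrite mul_refl h scalerDl scale1r opprD addrA subrr sub0r.
by [].
Qed.

Lemma tau_refl (v : 'rV[R]_N) b : dot v v = 2 ->
  tau (refl_mx v) (wedge (vec1 v) b) = - wedge (vec1 v) b.
Proof.
move=> h; rewrite tau_mul refl_self // vec1N wedgeNl; congr (- _).
rewrite tauE wedge_sumr {2}[b]ext_decomp wedge_sumr; apply: eq_bigr => S _.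
by rewrite !wedgeZr absorb Qw_enum.
Qed.

End ExtR.

Section Roots.
Variables (R : realFieldType) (N : nat) (Rt : seq 'rV[R]_N) (u0 : 'rV[R]_N).
Hypotheses (hR : root_system Rt) (hg : generic Rt u0) (h1 : one_refl_class Rt)
  (N0 : (0 < N)%N).

Local Notation Rp := (pos_roots Rt u0).

Lemma Rt_uniq : uniq Rt. Proof. by case: hR. Qed.
Lemma Rt_norm v : v \in Rt -> dot v v = 2. Proof. by case: hR => _ _ H _ _; apply: H. Qed.
Lemma Rt_refl u v : u \in Rt -> v \in Rt -> u *m refl_mx v \in Rt.
Proof. by case: hR => _ _ _ H _; apply: H. Qed.
Lemma Rt_span : <<Rt>>%VS = fullv. Proof. by case: hR. Qed.

Lemma dotN (u v : 'rV[R]_N) : dot u (- v) = - dot u v.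
Proof. by rewrite /dot linearN /= mulmxN mxE. Qed.

Lemma dotNl (u v : 'rV[R]_N) : dot (- u) v = - dot u v.
Proof. by rewrite /dot mulNmx mxE. Qed.

Lemma Rt_opp v : v \in Rt -> - v \in Rt.
Proof. by move=> vR; rewrite -(refl_self (Rt_norm vR)) Rt_refl. Qed.

Lemma Rt_oppE v : (- v \in Rt) = (v \in Rt).
Proof. by apply/idP/idP => [/Rt_opp|/Rt_opp //]; rewrite opprK. Qed.

Lemma pairing (V : zmodType) (f : 'rV[R]_N -> V) : (forall v, f (- v) = f v) ->
  \sum_(v <- Rt) f v = (\sum_(v <- Rp) f v) *+ 2.
Proof.
move=> fN; rewrite (bigID (fun v => 0 < dot u0 v)) /= mulr2n; congr (_ + _).
  by rewrite /pos_roots big_filter.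
rewrite -big_filter.
transitivity (\sum_(v <- map -%R [seq v <- Rt | ~~ (0 < dot u0 v)]) f v).
  by rewrite big_map; apply: eq_bigr => v _; rewrite fN.
apply: perm_big; apply: uniq_perm.
- by rewrite (map_inj_uniq oppr_inj) filter_uniq // Rt_uniq.
- by rewrite /pos_roots filter_uniq // Rt_uniq.
move=> x; rewrite /pos_roots -[x in LHS]opprK mem_map; last exact: oppr_inj.
rewrite !mem_filter dotN Rt_oppE oppr_gt0 -leNgt.
case: (boolP (x \in Rt)) => xR; rewrite ?andbF //.
by rewrite le_eqVlt eq_sym (negbTE (hg xR)).
Qed.


Lemma dotBl (u u' v : 'rV[R]_N) : dot (u - u') v = dot u v - dot u' v.
Proof. by rewrite /dot mulmxBl !mxE. Qed.

Lemma dotZl k (u v : 'rV[R]_N) : dot (k *: u) v = k * dot u v.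
Proof. by rewrite /dot -scalemxAl mxE. Qed.

Lemma refl_invol (v : 'rV[R]_N) : dot v v = 2 -> forall u : 'rV[R]_N, u *m refl_mx v *m refl_mx v = u.
Proof.
move=> h u; rewrite !mul_refl dotBl dotZl h.
have -> : dot u v - dot u v * 2 = - dot u v by ring.
by rewrite scaleNr opprK subrK.
Qed.

Lemma refl_sq (v : 'rV[R]_N) : dot v v = 2 -> refl_mx v *m refl_mx v = 1%:M.
Proof. by move=> h; apply/row_matrixP => i; rewrite !rowE mulmxA refl_invol // mulmx1. Qed.

Lemma refl_sym (v : 'rV[R]_N) : (refl_mx v)^T = refl_mx v.
Proof. by rewrite /refl_mx linearB /= trmx1 trmx_mul trmxK. Qed.

Definition Mr := \sum_(v <- Rt) v^T *m v.

Lemma Mr_inv s : s \in Rt -> refl_mx s *m Mr *m refl_mx s = Mr.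
Proof.
move=> sR; have hs := Rt_norm sR.
rewrite /Mr mulmx_sumr mulmx_suml.
transitivity (\sum_(v <- map (fun v => v *m refl_mx s) Rt) v^T *m v).
  by rewrite big_map; apply: eq_bigr => v _; rewrite trmx_mul refl_sym !mulmxA.
apply: perm_big; apply: uniq_perm.
- rewrite map_inj_uniq ?Rt_uniq // => x y /(congr1 (mulmx^~ (refl_mx s))).
  by rewrite !refl_invol.
- exact: Rt_uniq.
move=> x; apply/mapP/idP => [[y yR ->]|xR]; first exact: Rt_refl.
by exists (x *m refl_mx s); [exact: Rt_refl | rewrite refl_invol].
Qed.

Lemma Mr_comm s : s \in Rt -> Mr *m refl_mx s = refl_mx s *m Mr.
Proof.
move=> sR; rewrite -{1}(Mr_inv sR) -!mulmxA refl_sq ?mulmx1 //.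
exact: Rt_norm.
Qed.

Lemma W_comm w : inW Rt w -> Mr *m w = w *m Mr.
Proof.
elim => [|v w' vR _ IH]; first by rewrite mulmx1 mul1mx.
by rewrite mulmxA IH -mulmxA Mr_comm // mulmxA.
Qed.

Lemma cancel2 (x y : 'rV[R]_N) : 2 *: x = 2 *: y -> x = y.
Proof.
move/(congr1 (fun z => 2^-1 *: z)); rewrite !scalerA mulVf ?pnatr_eq0 //.
by rewrite !scale1r.
Qed.

Definition ceig s := dot (s *m Mr) s / 2.

Lemma eig_self s : s \in Rt -> s *m Mr = ceig s *: s.
Proof.
move=> sR; set y := s *m Mr.
have e1 : y *m refl_mx s = - y.
  by rewrite /y -mulmxA Mr_comm // mulmxA refl_self ?Rt_norm // mulNmx.
have h2 : 2 *: y = dot y s *: s.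
  by move: e1; rewrite mul_refl => e1; rewrite scaler_nat mulr2n -{2}[y]opprK -e1 opprB addrC subrK.
apply: cancel2; rewrite h2 scalerA /ceig mulrCA mulfV ?pnatr_eq0 // mulr1.
by [].
Qed.


Lemma eig_all u s : u \in Rt -> s \in Rt -> u *m Mr = ceig s *: u.
Proof.
move=> uR sR; have [w [Ww [Uw ew]]] := h1 uR sR.
have e2 : u^T *m u = invmx w *m s^T *m (s *m w).
  move: ew; rewrite /refl_mx mulmxBr mulmx1 mulmxBl mulVmx // => /eqP.
  by rewrite (can_eq (addKr 1%:M)) eqr_opp !mulmxA => /eqP.
have e3 : 2 *: u = (u *m invmx w *m s^T) 0 0 *: (s *m w).
  rewrite -(Rt_norm uR) /dot -mul_scalar_mx -mx11_scalar -mulmxA e2 !mulmxA.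
  by rewrite -mulmxA -mul_scalar_mx -mx11_scalar.
apply: cancel2; rewrite scalemxAl e3 -scalemxAl -[s *m w *m Mr]mulmxA -(W_comm Ww) mulmxA eig_self //.
have -> : 2 *: (ceig s *: u) = ceig s *: (2 *: u) by rewrite !scalerA mulrC.
by rewrite -scalemxAl e3 !scalerA mulrC.
Qed.

Lemma Rt_nonempty : exists s, s \in Rt.
Proof.
case: Rt hR => [|s l] [_ sp _ _ _]; last by exists s; rewrite inE eqxx.
have : (delta_mx 0 (Ordinal N0) : 'rV[R]_N) \in <<[::] : seq 'rV[R]_N>>%VS by rewrite sp memvf.
rewrite span_nil memv0 => /eqP /matrixP /(_ 0 (Ordinal N0)).
by rewrite !mxE !eqxx /= => /eqP; rewrite oner_eq0.
Qed.


Lemma sum_const_seq (T : Type) (V : zmodType) (s : seq T) (x : V) :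
  \sum_(v <- s) x = x *+ size s.
Proof. by elim: s => [|a s IH]; rewrite ?big_nil ?big_cons ?IH ?mulrS. Qed.

Lemma Mr_scalar s : s \in Rt -> forall a : 'rV[R]_N, a *m Mr = ceig s *: a.
Proof.
move=> sR a; have := memvf a; rewrite -Rt_span => aS.
rewrite (coord_span (X := in_tuple Rt) aS) mulmx_suml scaler_sumr.
apply: eq_bigr => i _; rewrite -scalemxAl (eig_all _ sR); last by apply: mem_nth; rewrite ltn_ord.
by rewrite !scalerA mulrC.
Qed.

Lemma Mr_trace : \tr Mr = 2 *+ size Rt.
Proof.
rewrite /Mr raddf_sum /= -sum_const_seq big_seq [RHS]big_seq.
apply: eq_bigr => v vR; rewrite mxtrace_mulC trace_mx11.
exact: Rt_norm.
Qed.

Lemma ceig_val s : s \in Rt -> ceig s *+ N = 2 *+ size Rt.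
Proof.
move=> sR; rewrite -Mr_trace.
have -> : Mr = (ceig s)%:M.
  apply/row_matrixP => i; rewrite !rowE (Mr_scalar sR).
  by rewrite mul_mx_scalar.
by rewrite mxtrace_scalar.
Qed.

Lemma size_Rt : (size Rt)%:R = ((size Rp)%:R *+ 2 : R).
Proof.
have := @pairing R (fun _ => (1 : R)) (fun _ => erefl).
by rewrite !sum_const_seq.
Qed.

Lemma sum_Rp (a : 'rV[R]_N) :
  \sum_(v <- Rp) dot a v *: v = coxeter Rp *: a.
Proof.
have [s sR] := Rt_nonempty.
have e1 : \sum_(v <- Rt) dot a v *: v = ceig s *: a.
  rewrite -(Mr_scalar sR) /Mr mulmx_sumr; apply: eq_bigr => v _.
  rewrite mulmxA /dot [a *m v^T]mx11_scalar mul_scalar_mx; congr (_ *: _).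
  by rewrite mxE eqxx mulr1n.
rewrite pairing in e1; last by move=> v; rewrite dotN scaleNr scalerN opprK.
have Nn0 : (N%:R : R) != 0 by rewrite pnatr_eq0 -lt0n.
have ec : ceig s = 2 * coxeter Rp.
  have := ceig_val sR; rewrite -mulr_natr -[2 *+ _]mulr_natr size_Rt => h.
  apply: (mulIf Nn0); rewrite h /coxeter -!mulrA mulVf // mulr1.
  by rewrite mulr2n; ring.
apply: cancel2; rewrite scaler_nat e1 ec scalerA.
by [].
Qed.

End Roots.

From Stdlib Require Import ClassicalEpsilon.

Section PolyPart.
Variables (R : realFieldType) (N : nat).
Local Notation poly := {mpoly R[N]}.
Local Notation ext := {ffun {set 'I_N} -> R}.
Local Notation extp := {ffun {set 'I_N} -> poly}.

Lemma mderiv_lin (c : 'I_N -> R) (i : 'I_N) :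
  mderiv i (\sum_j c j *: 'X_j : poly) = (c i)%:MP.
Proof.
rewrite (big_morph (mderiv i) (mderivD i) (@mderiv0 _ _ i)).
rewrite (bigD1 i) //= big1 ?addr0.
  rewrite mderivZ mderivX mnm1E eqxx scale1r.
  have -> : (U_(i) - U_(i))%MM = 0%MM by apply/mnmP => k; rewrite mnmBE subnn mnm0E.
  by rewrite mpolyX0 -mul_mpolyC mulr1.
move=> j nji; rewrite mderivZ mderivX mnm1E (negbTE nji) scale0r scaler0.
by [].
Qed.

Lemma wedge_tens (p q : poly) (c d : ext) :
  wedge (tens p c) (tens q d) = tens (p * q) (wedge c d).
Proof.
apply/ffunP => U; rewrite !ffunE rmorph_sum mulr_sumr; apply: eq_bigr => S _.
rewrite rmorph_sum mulr_sumr; apply: eq_bigr => T _; rewrite !ffunE.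
case: ifP => _; last by rewrite rmorph0 mulr0.
rewrite /wsign !rmorphM rmorphXn rmorphN1 /=.
ring.
Qed.

Lemma tensDr p (c d : ext) : tens p (c + d) = tens p c + tens p d.
Proof. by apply/ffunP => S; rewrite !ffunE mpolyCD mulrDr. Qed.

Lemma tens0r p : tens p (0 : ext) = 0.
Proof. by apply/ffunP => S; rewrite !ffunE mpolyC0 mulr0. Qed.

Lemma tens_sumr p (I : Type) (r : seq I) (P : pred I) (F : I -> ext) :
  tens p (\sum_(i <- r | P i) F i) = \sum_(i <- r | P i) tens p (F i).
Proof. exact: (big_morph _ (tensDr p) (tens0r p)). Qed.

Lemma tensC (k : R) (c : ext) : tens k%:MP c = cst (escale k c).
Proof. by apply/ffunP => S; rewrite !ffunE mpolyCM mul1r. Qed.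

Lemma cstD (c d : ext) : cst (c + d) = cst c + cst d.
Proof. exact: tensDr. Qed.

Lemma cst_sum (I : Type) (r : seq I) (P : pred I) (F : I -> ext) :
  cst (\sum_(i <- r | P i) F i) = \sum_(i <- r | P i) cst (F i).
Proof. exact: tens_sumr. Qed.

Lemma cstZ (k : R) (c : ext) : k *: cst c = cst (escale k c).
Proof. by apply/ffunP => S; rewrite !ffunE !mul1r -mul_mpolyC mpolyCM. Qed.

Lemma cst0 : cst (0 : ext) = 0.
Proof. exact: tens0r. Qed.


Lemma psubX (w : 'M[R]_N) j : psub w 'X_j = \sum_i w i j *: 'X_i.
Proof. by rewrite /psub comp_mpolyXU -tnth_nth tnth_mktuple. Qed.

Lemma psub_lin (c : 'I_N -> R) (w : 'M[R]_N) :
  psub w (\sum_j c j *: 'X_j) = \sum_j c j *: \sum_i w i j *: 'X_i.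
Proof.
rewrite /psub (big_morph _ (comp_mpolyD _) (comp_mpoly0 _)).
by apply: eq_bigr => j _; rewrite comp_mpolyZ -/(psub w _) psubX.
Qed.

Lemma refl_entry (v : 'rV[R]_N) i j : refl_mx v i j = (i == j)%:R - v 0 i * v 0 j.
Proof. by rewrite !mxE big_ord1 !mxE. Qed.

Lemma diff_lin (v : 'rV[R]_N) (c : 'I_N -> R) :
  (\sum_j c j *: 'X_j : poly) - psub (refl_mx v) (\sum_j c j *: 'X_j)
  = (\sum_j c j * v 0 j)%:MP * linpoly v.
Proof.
rewrite psub_lin.
have inner j : \sum_i refl_mx v i j *: ('X_i : poly) = 'X_j - v 0 j *: linpoly v.
  under eq_bigr => i _ do rewrite refl_entry scalerBl.
  rewrite sumrB /linpoly scaler_sumr; congr (_ - _).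
    rewrite (bigD1 j) //= big1 ?addr0 ?eqxx ?scale1r // => i nij.
    by rewrite (negbTE nij) scale0r.
  by apply: eq_bigr => i _; rewrite scalerA mulrC.
have -> : \sum_j c j *: \sum_i refl_mx v i j *: ('X_i : poly) =
   \sum_j (c j *: 'X_j - c j *: (v 0 j *: linpoly v)).
  by apply: eq_bigr => j _; rewrite inner scalerBr.
rewrite sumrB opprB addrC subrK mul_mpolyC scaler_suml.
by apply: eq_bigr => j _; rewrite scalerA.
Qed.

Lemma dotvv (v : 'rV[R]_N) : dot v v = \sum_k v 0 k * v 0 k.
Proof. by rewrite /dot !mxE; apply: eq_bigr => k _; rewrite !mxE. Qed.

Lemma linpoly_neq0 (v : 'rV[R]_N) : dot v v = 2 -> linpoly v != 0.
Proof.
move=> h; apply/eqP => L0.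
have v0 k : v 0 k = 0.
  have := mderiv_lin (fun j => v 0 j) k; rewrite -/(linpoly v) L0 mderiv0.
  by move/esym/eqP; rewrite mpolyC_eq0 => /eqP.
by move: h; rewrite dotvv big1 => [/eqP|k _]; rewrite ?v0 ?mul0r // eq_sym pnatr_eq0.
Qed.

Lemma ddiff_lin (v : 'rV[R]_N) (c : 'I_N -> R) : dot v v = 2 ->
  ddiff v (\sum_j c j *: 'X_j) = (\sum_j c j * v 0 j)%:MP.
Proof.
move=> h; rewrite /ddiff.
set P := fun q => _ = q * linpoly v.
have ex : exists q, P q by eexists; exact: diff_lin.
have := epsilon_spec (inhabits 0) P ex; rewrite /P diff_lin => e.
by apply: (mulIf (linpoly_neq0 h)); rewrite -e.
Qed.

End PolyPart.

Section Main.
Variables (R : realFieldType) (N : nat) (Rt : seq 'rV[R]_N) (u0 : 'rV[R]_N)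
  (kappa : R) (m : nat) (b : {ffun {set 'I_N} -> R}).
Hypotheses (hR : root_system Rt) (hg : generic Rt u0) (h1 : one_refl_class Rt)
  (hm : (1 <= m <= N)%N) (hb : is_kvec m b).

Local Notation Rp := (pos_roots Rt u0).
Local Notation gamma := (coxeter Rp).
Local Notation F := (wedge (xvec R N) (cst b)).
Local Notation ee := (@e R N).

Lemma N0 : (0 < N)%N.
Proof. by case/andP: hm => h1m hmN; apply: leq_trans hmN. Qed.

Lemma F_eq : F = \sum_j tens 'X_j (wedge (ee j) b).
Proof.
rewrite /xvec wedge_suml; apply: eq_bigr => j _.
by rewrite /cst wedge_tens mulr1.
Qed.

Lemma FS S : F S = \sum_j (wedge (ee j) b S) *: 'X_j.
Proof.
rewrite F_eq sum_ffunE; apply: eq_bigr => j _.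
by rewrite ffunE mulrC mul_mpolyC.
Qed.

Lemma F_homog S : F S \is 1.-homog.
Proof.
rewrite FS; apply: rpred_sum => j _; apply: rpredZ.
by rewrite dhomogX; apply/eqP; exact: mpoly.mdeg1.
Qed.

Lemma kvec_e j : is_kvec m.+1 (wedge (ee j) b).
Proof.
move=> U hU; rewrite ffunE big1 // => S _; rewrite big1 // => T _.
case: ifP => // /andP [/eqP dST /eqP uST].
rewrite !ffunE; case: eqP => [eS|]; last by rewrite mulr0 mul0r.
rewrite hb ?mulr0 //; apply: contra hU => /eqP cT.
have jT : j \notin T.
  by apply/negP => jT; have := in_set0 j; rewrite -dST eS !inE eqxx jT.
by rewrite -uST eS cardsU1 cT jT.
Qed.

Lemma F_kvec : is_kvec m.+1 F.
Proof.
move=> S hS; rewrite FS big1 // => j _.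
by rewrite kvec_e // scale0r.
Qed.


Lemma wedge_vec1_coef (v : 'rV[R]_N) S :
  wedge (vec1 v) b S = \sum_j wedge (ee j) b S * v 0 j.
Proof.
rewrite vec1E wedge_suml sum_ffunE; apply: eq_bigr => j _.
by rewrite wedgeZl ffunE mulrC.
Qed.

Lemma Rp_norm v : v \in Rp -> dot v v = 2.
Proof. by rewrite mem_filter => /andP [_ vR]; apply: (Rt_norm hR). Qed.

Lemma dunklF (i : 'I_N) :
  dunkl Rp kappa i F = cst (escale (1 - gamma * kappa) (wedge (ee i) b)).
Proof.
rewrite /dunkl.
transitivity (\sum_S (cst (escale (wedge (ee i) b S) (ebasis R S)) +
   \sum_(v <- Rp) cst (escale (kappa * v 0 i * wedge (vec1 v) b S) (tau (refl_mx v) (ebasis R S))))).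
  apply: eq_bigr => S _; congr (_ + _).
    by rewrite FS mderiv_lin tensC.
  rewrite big_seq [RHS]big_seq; apply: eq_bigr => v vRp.
  rewrite FS ddiff_lin ?Rp_norm // -wedge_vec1_coef -mul_mpolyC -mpolyCM tensC.
  by [].
rewrite big_split /= exchange_big /=.
under [X in _ + X]eq_bigr => v _ do rewrite -cst_sum.
rewrite -!cst_sum -cstD; congr cst.
rewrite -ext_decomp.
have -> : \sum_(v <- Rp) \sum_S escale (kappa * v 0 i * wedge (vec1 v) b S)
            (tau (refl_mx v) (ebasis R S)) =
          \sum_(v <- Rp) escale (kappa * v 0 i) (- wedge (vec1 v) b).
  rewrite big_seq [RHS]big_seq; apply: eq_bigr => v vRp.
  rewrite -tau_refl ?Rp_norm // -tauZ [X in tau _ (escale _ X)]ext_decomp escale_sum tau_sum.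
  by apply: eq_bigr => S _; rewrite escaleA tauZ.
have -> : \sum_(v <- Rp) escale (kappa * v 0 i) (- wedge (vec1 v) b) =
          - escale kappa (wedge (vec1 (\sum_(v <- Rp) v 0 i *: v)) b).
  rewrite vec1_sum wedge_suml escale_sum -sumrN; apply: eq_bigr => v _.
  by rewrite vec1Z wedgeZl escaleA escaleN.
have -> : \sum_(v <- Rp) v 0 i *: v = gamma *: delta_mx 0 i.
  rewrite -(sum_Rp hR hg h1 N0); apply: eq_bigr => v _.
  by rewrite dot_delta.
rewrite vec1Z vec1_delta wedgeZl escaleA escaleDl escale1 escaleNl mulrC.
by [].
Qed.


Lemma gamma_neq0 : gamma != 0.
Proof.
have [s sR] := Rt_nonempty hR N0.
have hs : (size Rt != 0)%N by case: (Rt) sR.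
have := size_Rt hR hg; rewrite /coxeter => e.
rewrite !mulf_neq0 ?invr_eq0 ?pnatr_eq0 //; last by rewrite -lt0n N0.
by apply: contra hs => /eqP h; move: e; rewrite h mul0rn => /eqP; rewrite pnatr_eq0.
Qed.

End Main.

Theorem theorem3p5 (R : realFieldType) (N : nat) (Rt : seq 'rV[R]_N)
    (u0 : 'rV[R]_N) (kappa : R) (m : nat) (a : 'rV[R]_N)
    (b : {ffun {set 'I_N} -> R}) :
  root_system Rt -> generic Rt u0 -> one_refl_class Rt ->
  (1 <= m <= N)%N -> is_kvec m b ->
  let Rp := pos_roots Rt u0 in
  let gamma := coxeter Rp in
  let F := wedge (xvec R N) (cst b) in
  [/\ (forall S : {set 'I_N}, F S \is 1.-homog),
      is_kvec m.+1 F,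
      \sum_(i < N) a 0 i *: dunkl Rp kappa i F
        = cst (escale (1 - gamma * kappa) (wedge (vec1 a) b))
    & (kappa = gamma^-1 -> forall i : 'I_N, dunkl Rp kappa i F = 0)].
Proof.
move=> hR hg h1 hm hb; cbv zeta; split.
- by move=> S; apply: F_homog.
- exact: F_kvec hb.
- under eq_bigr => i _ do rewrite (dunklF kappa b hR hg h1 hm) cstZ.
  rewrite -cst_sum; congr cst.
  rewrite vec1E wedge_suml escale_sum; apply: eq_bigr => i _.
  by rewrite wedgeZl !escaleA mulrC.
- move=> hk i; rewrite (dunklF kappa b hR hg h1 hm) hk mulfV ?(gamma_neq0 hR hg hm) //.
  by rewrite subrr escale0l cst0.
Qed.
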